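(* Let $N$ be an isolating block and $S=\operatorname{Inv} N$. If $L$ is any sufficiently small compact neighborhood of $N^-$ in $N$, then $(N,L)$ is a filtration pair for $S$. Moreover, there is a neighborhood of $f$ in the $C^0$ topology such that for any $\tilde f$ in this neighborhood, $\tilde S=\operatorname{Inv}(N\setminus L,\tilde f)$ (the maximal invariant subset computed with respect to $\tilde f$) is an isolated invariant set for $\tilde f$ and $(N,L)$ is a filtration pair for $\tilde S$ with respect to $\tilde f$.
   Context: Let $X$ be a locally compact metric space, $U\subset X$ open and $f:U\to X$ continuous. For $N\subset U$, a solution through $x$ is a map $\sigma:\mathbb Z\to U$ with $\sigma(0)=x$ and $f(\sigma(n))=\sigma(n+1)$ for all $n$; $\operatorname{Inv} N$ is the set of $x\in N$ admitting a solution through $x$ with all values in $N$. A compact set $N\subset U$ is an isolating neighborhood if $\operatorname{Inv} N\subset\operatorname{Int} N$; a set $S$ is an isolated invariant set if $S=\operatorname{Inv} N$ for some isolating neighborhood $N$. A compact set $N$ is an isolating block if $f(N)\cap N\cap f^{-1}(N)\subset\operatorname{Int} N$. The exit set of $N$ is $N^-=\{x\in N: f(x)\notin\operatorname{Int} N\}$. A filtration pair for an isolated invariant set $S$ is a pair of compact sets $L\subset N$ contained in the interior of the domain of $f$, each equal to the closure of its interior, such that (1) $\operatorname{cl}(N\setminus L)$ is an isolating neighborhood with $\operatorname{Inv}\operatorname{cl}(N\setminus L)=S$; (2) $L$ is a neighborhood of $N^-$ in $N$; (3) $f(L)\cap\operatorname{cl}(N\setminus L)=\emptyset$. The same notions are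 used for any other continuous map $\tilde f:U\to X$ in place of $f$.
   Formalization: The isolating block N is also assumed to equal the closure of its interior, and L ranges only over those sufficiently small compact neighborhoods of $N^-$ in N that equal the closure of their interior. The statement above fails without it. *)

(* Defs.v *)
From HB Require Import structures.
From mathcomp Require Import all_boot all_order all_algebra.
From mathcomp Require Import all_classical all_reals all_analysis.
Set Implicit Arguments. Unset Strict Implicit. Unset Printing Implicit Defensive.
Import Order.TTheory GRing.Theory Num.Theory.
Local Open Scope classical_set_scope.
Local Open Scope ring_scope.

Section Conley.
Context {R : realType} {X : pseudoMetricType R}.

(* A map f : U -> X is represented by a total f : X -> X; only its values
   on the domain U matter. *)
Definition InvSet (U : set X) (f : X -> X) (N : set X) : set X :=
  [set x | N x /\ exists sigma : int -> X,
     sigma 0 = x /\ forall n : int,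
       U (sigma n) /\ N (sigma n) /\ f (sigma n) = sigma (n + 1)].

Definition isolating_nbhd (U : set X) (f : X -> X) (N : set X) : Prop :=
  compact N /\ N `<=` U /\ InvSet U f N `<=` interior N.

Definition isolated_invariant_set (U : set X) (f : X -> X) (S : set X) : Prop :=
  exists N, isolating_nbhd U f N /\ S = InvSet U f N.

Definition isolating_block (U : set X) (f : X -> X) (N : set X) : Prop :=
  compact N /\ N `<=` U /\
  (f @` N) `&` N `&` (U `&` f @^-1` N) `<=` interior N.

Definition exit_set (f : X -> X) (N : set X) : set X :=
  [set x | N x /\ ~ interior N (f x)].

Definition nbhd_in (N A L : set X) : Prop :=
  L `<=` N /\ exists O : set X, open O /\ A `<=` O /\ O `&` N `<=` L.

Definition filtration_pair (U : set X) (f : X -> X) (S N L : set X) : Prop :=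
  compact L /\ compact N /\ L `<=` N /\
  N `<=` interior U /\ L `<=` interior U /\
  closure (interior N) = N /\ closure (interior L) = L /\
  isolating_nbhd U f (closure (N `\` L)) /\ InvSet U f (closure (N `\` L)) = S /\
  nbhd_in N (exit_set f N) L /\
  (f @` L) `&` closure (N `\` L) = set0.

Definition cont_on (U : set X) (f : X -> X) : Prop :=
  forall x, U x -> {for x, continuous f}.

End Conley.

(* Main.v *)
Require Import Defs.
From HB Require Import structures.
From mathcomp Require Import all_boot all_order all_algebra.
From mathcomp Require Import all_classical all_reals all_analysis.
Import Order.TTheory GRing.Theory Num.Theory.
Local Open Scope classical_set_scope.
Local Open Scope ring_scope.


Lemma unif2 (R : realType) (X : pseudoMetricType R) (A C1 C2 : set X) (h1 h2 : X -> X) :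
  compact A -> closed C1 -> closed C2 ->
  (forall x, A x -> {for x, continuous h1}) ->
  (forall x, A x -> {for x, continuous h2}) ->
  (forall x, A x -> ~ C1 (h1 x) \/ ~ C2 (h2 x)) ->
  exists2 e : R, 0 < e & forall z, A z ->
    (forall w, ball (h1 z) e w -> ~ C1 w) \/ (forall w, ball (h2 z) e w -> ~ C2 w).
Proof.
move=> /compact_near_coveringP cA cC1 cC2 ch1 ch2 hA.
have key : forall (C : set X) (h : X -> X) x, closed C -> {for x, continuous h} ->
   ~ C (h x) -> exists2 r : R, 0 < r & forall x' e, ball (h x) r (h x') -> e <= r ->
     forall w, ball (h x') e w -> ~ C w.
  move=> C h x cC chx nC.
  have : nbhs (h x) (~` C) by apply: open_nbhs_nbhs; split => //; exact: closed_openC.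
  move=> /nbhs_ballP [r /= r0 sub].
  exists (r / 2); first by rewrite divr_gt0.
  move=> x' e bx le w bw; apply: (sub w).
  have := ball_triangle bx bw; apply: le_ball.
  by rewrite [leRHS](splitr r) lerD.
have : \forall e \near (0:R)^'+, A `<=` (fun z => 0 < e /\
    ((forall w, ball (h1 z) e w -> ~ C1 w) \/ (forall w, ball (h2 z) e w -> ~ C2 w))).
  apply: (cA _ ((0:R)^'+) (fun e z => 0 < e /\
    ((forall w, ball (h1 z) e w -> ~ C1 w) \/ (forall w, ball (h2 z) e w -> ~ C2 w)))).
  move=> x Ax; case: (hA x Ax) => nC.
  + have [r r0 Hr] := key _ _ _ cC1 (ch1 x Ax) nC.
    have hn : \forall x' \near x, ball (h1 x) r (h1 x').
      by apply: (ch1 x Ax); apply: nbhsx_ballx.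
    exists ([set x' | ball (h1 x) r (h1 x')], [set e : R | 0 < e /\ e <= r]).
      split => //=; near=> e; split; first by near: e; exact: nbhs_right_gt.
      by apply/ltW; near: e; exact: nbhs_right_lt.
    by case=> x' e /= [bx [e0 er]]; split => //; left; exact: Hr.
  + have [r r0 Hr] := key _ _ _ cC2 (ch2 x Ax) nC.
    have hn : \forall x' \near x, ball (h2 x) r (h2 x').
      by apply: (ch2 x Ax); apply: nbhsx_ballx.
    exists ([set x' | ball (h2 x) r (h2 x')], [set e : R | 0 < e /\ e <= r]).
      split => //=; near=> e; split; first by near: e; exact: nbhs_right_gt.
      by apply/ltW; near: e; exact: nbhs_right_lt.
    by case=> x' e /= [bx [e0 er]]; split => //; right; exact: Hr.
- move=> /filter_ex [e sub].
  have [[a Aa]|A0] := pselect (A !=set0).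
    + have [e0 _] := sub a Aa.
      by exists e => // z Az; have [] := sub z Az.
    + exists 1 => // z Az; exfalso; apply: A0; by exists z.
Unshelve. all: end_near. Qed.


Section Helpers.
Context {R : realType} {X : pseudoMetricType R}.

Lemma inv_shift (U : set X) h (M : set X) x (sig : int -> X) :
  sig 0 = x ->
  (forall n, U (sig n) /\ M (sig n) /\ h (sig n) = sig (n + 1)) ->
  forall n, InvSet U h M (sig n).
Proof.
move=> _ H n; split; first by case: (H n) => _ [].
exists (fun k => sig (n + k)); split; first by rewrite addr0.
by move=> k; rewrite addrA; exact: H.
Qed.

Lemma inv_mono (U : set X) h (M1 M2 : set X) :
  M1 `<=` M2 -> InvSet U h M1 `<=` InvSet U h M2.
Proof.
move=> s x [M1x [sig [s0 Hs]]]; split; first exact: s.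
exists sig; split => // n; have [? [? ?]] := Hs n; split => //; split => //; exact: s.
Qed.

Lemma closure_cont (A C : set X) (h : X -> X) x : closed C ->
  {for x, continuous h} -> closure A x -> (forall y, A y -> C (h y)) -> C (h x).
Proof.
move=> cC hc clA AC; apply: contrapT => nC.
have : nbhs (h x) (~` C) by apply: open_nbhs_nbhs; split => //; exact: closed_openC.
move=> /hc /clA [y [Ay /= nCy]]; exact: nCy (AC y Ay).
Qed.

Lemma iso_gen (U : set X) h (N L : set X) : hausdorff_space X -> compact N ->
  N `<=` U -> compact L ->
  (h @` L) `&` closure (N `\` L) = set0 ->
  InvSet U h (closure (N `\` L)) `<=` interior N ->
  isolating_nbhd U h (closure (N `\` L)).
Proof.
move=> hX cN NU cL H3 Hi.
have clN := compact_closed hX cN; have clL := compact_closed hX cL.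
have cN' : closure N = N by apply/esym/closure_id.
have sub : closure (N `\` L) `<=` N.
  by move=> y cy; rewrite -cN'; apply: closureS cy; move=> ? [].
split; first by apply: (subclosed_compact _ cN sub); exact: closed_closure.
split; first by move=> y /sub /NU.
move=> x Ix; have [sig [s0 Hs]] := Ix.2.
have nL : ~ L x.
  move=> Lx; have : (h @` L `&` closure (N `\` L)) (h x).
    split; first by exists x.
    have [_ [_ e]] := Hs 0; rewrite s0 add0r in e; rewrite e.
    by have [_ [? _]] := Hs 1.
  by rewrite H3.
apply: (@filterS _ _ _ (interior N `&` ~` L)).
  move=> y [iy ny]; apply: subset_closure; split => //; exact: interior_subset.
apply: open_nbhs_nbhs; split; first by apply: openI; [exact: open_interior | exact: closed_openC].
by split => //; exact: Hi.
Qed.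

Lemma fp_gen (U : set X) h (S N L : set X) : hausdorff_space X -> open U ->
  compact N -> N `<=` U -> compact L -> L `<=` N ->
  closure (interior N) = N -> closure (interior L) = L ->
  nbhd_in N (exit_set h N) L ->
  (h @` L) `&` closure (N `\` L) = set0 ->
  InvSet U h (closure (N `\` L)) `<=` interior N ->
  InvSet U h (closure (N `\` L)) = S ->
  filtration_pair U h S N L.
Proof.
move=> hX oU cN NU cL LN iN iL nb H3 Hi eS.
have iU : interior U = U by apply/interior_id.
rewrite /filtration_pair iU.
split; first done. split; first done. split; first done.
split; first done. split; first by move=> y /LN /NU.
split; first done. split; first done.
split; first exact: iso_gen.
by split.
Qed.

Lemma inv_cl (U : set X) h (N L : set X) :
  closure (N `\` L) `<=` N ->
  (h @` L) `&` closure (N `\` L) = set0 ->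
  InvSet U h (closure (N `\` L)) = InvSet U h (N `\` L).
Proof.
move=> sub H3; apply/seteqP; split; last by apply: inv_mono; exact: subset_closure.
move=> x Ix; have [sig [s0 Hs]] := Ix.2.
have good : forall n, (N `\` L) (sig n).
  move=> n; have [_ [cn e]] := Hs n; split; first exact: sub.
  move=> Ln; have [_ [cn1 _]] := Hs (n + 1).
  have : (h @` L `&` closure (N `\` L)) (sig (n + 1)) by split => //; exists (sig n).
  by rewrite H3.
split; first by rewrite -s0; exact: good.
exists sig; split => // n; have [? [_ ?]] := Hs n; split => //; split => //; exact: good.
Qed.

End Helpers.

Theorem mainTheorem2 (R : realType) (X : pseudoMetricType R)
  (U : set X) (f : X -> X) (N : set X) :
  hausdorff_space X ->
  locally_compact [set: X] ->
  open U ->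
  cont_on U f ->
  isolating_block U f N ->
  closure (interior N) = N ->
  exists W : set X, open W /\ exit_set f N `<=` W /\
    forall L : set X,
      compact L -> nbhd_in N (exit_set f N) L -> L `<=` W ->
      closure (interior L) = L ->
      filtration_pair U f (InvSet U f N) N L /\
      exists K : set X, compact K /\ K `<=` U /\
      exists eps : R, 0 < eps /\
        forall g : X -> X, cont_on U g ->
          (forall x, K x -> ball (f x) eps (g x)) ->
          isolated_invariant_set U g (InvSet U g (N `\` L)) /\
          filtration_pair U g (InvSet U g (N `\` L)) N L.
Proof.
move=> hX lc oU fc [cN [NU blk]] clN.
have cldN := compact_closed hX cN.
have cN' : closure N = N by apply/esym/closure_id.
pose D := [set y | N y /\ N (f y) /\ N (f (f y))].
have clD : closed D.
  move=> x cx.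
  have Nx : N x by rewrite -cN'; apply: closureS cx; move=> ? [].
  have Nfx : N (f x) := @closure_cont R X D N f x cldN (fc x (NU x Nx)) cx (fun y Dy => Dy.2.1).
  have Nffx : N (f (f x)) := @closure_cont R X D N (f \o f) x cldN
     (continuous_comp (fc x (NU x Nx)) (fc _ (NU _ Nfx))) cx (fun y Dy => Dy.2.2).
  by [].
have ED : forall y, exit_set f N y -> ~ D y.
  move=> y [Ny nint] [_ [Nfy Nffy]]; apply: nint; apply: blk.
  by split; [split; [by exists y | done] | split; [exact: NU | done]].
exists (~` D); split; first exact: closed_openC.
split; first by move=> y /ED.
move=> L cL [LN [Op [oO [EO ON]]]] LW clL.
have cldL := compact_closed hX cL.
have subNL : closure (N `\` L) `<=` N.
  by move=> y cy; rewrite -cN'; apply: closureS cy; move=> ? [].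
have subNO : closure (N `\` L) `<=` N `&` ~` Op.
  move=> y cy; have : closed (N `&` ~` Op) by apply: closedI => //; exact: open_closedC.
  move/closure_id => ->; apply: closureS cy.
  by move=> z [Nz nLz]; split => // Oz; apply: nLz; exact: ON.
have InvD : InvSet U f N `<=` D.
  move=> x [Nx [sig [s0 Hs]]].
  have [_ [_ e0]] := Hs 0; rewrite s0 add0r in e0.
  have [_ [N1 e1]] := Hs 1. have [_ [N2 _]] := Hs (1 + 1).
  by split => //; rewrite e0 //; split => //; rewrite e1.
have H3f : f @` L `&` closure (N `\` L) = set0.
  rewrite -subset0 => y [[z Lz <-] cz].
  have [Nfz nOfz] := subNO _ cz.
  apply: (LW z Lz); split; first exact: LN.
  split => //; apply: interior_subset; apply: contrapT => nint.
  by apply: nOfz; apply: EO; split.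
have invf : InvSet U f (closure (N `\` L)) = InvSet U f N.
  apply/seteqP; split; first by apply: inv_mono.
  move=> x Ix; have [Nx [sig [s0 Hs]]] := Ix.
  have inD : forall n, (N `\` L) (sig n).
    move=> n; have Dn := InvD _ (@inv_shift R X U f N x sig s0 Hs n).
    by split; [exact: Dn.1 | move=> Ln; exact: LW _ Ln Dn].
  split; first by rewrite -s0; apply: subset_closure; exact: inD.
  exists sig; split => // n; have [? [_ ?]] := Hs n; split => //; split => //.
  exact: subset_closure (inD n).
have Hif : InvSet U f (closure (N `\` L)) `<=` interior N.
  rewrite invf => x [Nx [sig [s0 Hs]]]; apply: blk.
  have [Um1 [Nm1 em1]] := Hs (-1); rewrite addNr s0 in em1.
  have [Ux [_ e0]] := Hs 0; rewrite s0 add0r in e0.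
  have [_ [N1 _]] := Hs 1.
  split; first by split => //; exists (sig (-1)).
  by split; [rewrite -s0 | rewrite /preimage /= e0].
split.
  apply: fp_gen => //; first by split => //; exists Op.
exists N; split => //; split => //.
have [e1 e1p Ha] := @unif2 R X (N `&` ~` Op) (~` interior N) (~` interior N)
   f f (compact_closedI cN (open_closedC oO))
   (open_closedC (@open_interior _ N)) (open_closedC (@open_interior _ N))
   (fun x Ax => fc x (NU x Ax.1)) (fun x Ax => fc x (NU x Ax.1))
   (fun x Ax => or_introl (fun nint => Ax.2 (EO x (conj Ax.1 nint)))).
have condb : forall x, L x -> ~ closure (N `\` L) (f x) \/ ~ closure (N `\` L) (f x).
  move=> x Lx; left => c.
  have : (f @` L `&` closure (N `\` L)) (f x) by split => //; exists x.
  by rewrite H3f.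
have [e2 e2p Hb] := @unif2 R X (L) (closure (N `\` L)) (closure (N `\` L))
   f f cL (@closed_closure _ _) (@closed_closure _ _)
   (fun x Ax => fc x (NU x (LN x Ax))) (fun x Ax => fc x (NU x (LN x Ax))) condb.
have clfN : closed (f @` N).
  apply: (compact_closed hX); apply: continuous_compact => //.
  apply: continuous_in_subspaceT => x; rewrite in_setE => Nx; exact: fc x (NU x Nx).
have condc : forall x, (N `&` ~` interior N) x -> ~ (f @` N) (id x) \/ ~ N (f x).
  move=> x [Nx nint].
  have [fx|nfx] := pselect ((f @` N) x); last by left.
  have [Nf|nNf] := pselect (N (f x)); last by right.
  exfalso; apply: nint; apply: blk.
  by split; [split | split => //; exact: NU].
have [e3 e3p Hc] := @unif2 R X (N `&` ~` interior N) (f @` N) (N)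
   id f (compact_closedI cN (open_closedC (@open_interior _ N)))
   clfN cldN (fun x _ => cvg_id) (fun x Ax => fc x (NU x Ax.1)) condc.
pose e := Num.min e1 (Num.min e2 e3).
exists e; split; first by rewrite !lt_min e1p e2p e3p.
move=> g gc gclose.
have b1 : forall x, N x -> ball (f x) e1 (g x).
  by move=> x Nx; apply: le_ball (gclose x Nx); rewrite !ge_min lexx ?orbT.
have b2 : forall x, N x -> ball (f x) e2 (g x).
  by move=> x Nx; apply: le_ball (gclose x Nx); rewrite !ge_min lexx ?orbT.
have b3 : forall x, N x -> ball (f x) e3 (g x).
  by move=> x Nx; apply: le_ball (gclose x Nx); rewrite !ge_min lexx ?orbT.
have Ig : exit_set g N `<=` Op.
  move=> x [Nx nint]; apply: contrapT => nOx.
  by case: (Ha x (conj Nx nOx)) => H; apply: nint; apply: contrapT; exact: H _ (b1 x Nx).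
have H3g : g @` L `&` closure (N `\` L) = set0.
  rewrite -subset0 => y [[z Lz <-] cz].
  by case: (Hb z Lz) => H; exact: H _ (b2 z (LN z Lz)) cz.
have Hig : InvSet U g (closure (N `\` L)) `<=` interior N.
  move=> x [cx [sig [s0 Hs]]]; have Nx := subNL _ cx.
  apply: contrapT => nint.
  have [_ [cm1 em1]] := Hs (-1); rewrite addNr s0 in em1.
  have [_ [c1 e0]] := Hs 0; rewrite s0 add0r in e0.
  case: (Hc x (conj Nx nint)) => H.
  - apply: (H (f (sig (-1)))); last by exists (sig (-1)) => //; exact: subNL.
    rewrite /= -em1; apply: ball_sym; exact: b3 _ (subNL _ cm1).
  - apply: (H (g x)); first exact: b3 _ Nx.
    by rewrite e0; have [_ [c1p _]] := Hs 1; exact: subNL _ c1p.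
have invg := @inv_cl R X U g N L subNL H3g.
split.
  by exists (closure (N `\` L)); split; [exact: iso_gen | rewrite invg].
apply: fp_gen => //; by split => //; exists Op.
Qed.
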